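(* For all pure $\lambda$-terms $v, v'$: $v \Downarrow_h v'$ if and only if $v \Downarrow_{sf} v'$.
   Context: Pure $\lambda$-terms: $v ::= x \mid v\,v \mid \lambda x.v$, with capture-avoiding substitution; ''$u \not\equiv \lambda x.w$'' means $u$ is not a $\lambda$-abstraction. Weak-head big-step relation $\Downarrow_{wh}$, inductively defined by: $x \Downarrow_{wh} x$; $\lambda x.v \Downarrow_{wh} \lambda x.v$; if $v_1 \Downarrow_{wh} \lambda x.v_1'$ and $v_1'[v_2/x] \Downarrow_{wh} v$ then $v_1\,v_2 \Downarrow_{wh} v$; if $v_1 \Downarrow_{wh} v_1'$ and $v_1' \not\equiv \lambda x.w$ then $v_1\,v_2 \Downarrow_{wh} v_1'\,v_2$. Head big-step relation $\Downarrow_h$: if $v \Downarrow_{wh} \lambda x.v'$ and $v' \Downarrow_h v''$ then $v \Downarrow_h \lambda x.v''$; if $v \Downarrow_{wh} v'$ and $v' \not\equiv \lambda x.w$ then $v \Downarrow_h v'$. Sestoft's head big-step relation $\Downarrow_{sf}$: $x \Downarrow_{sf} x$; if $v \Downarrow_{sf} v'$ then $\lambda x.v \Downarrow_{sf} \lambda x.v'$; if $v_1 \Downarrow_{wh} v_1'$ and $v_1' \not\equiv \lambda x.w$ then $v_1\,v_2 \Downarrow_{sf} v_1'\,v_2$; if $v_1 \Downarrow_{wh} \lambda x.v_1'$ and $v_1'[v_2/x] \Downarrow_{sf} v$ then $v_1\,v_2 \Downarrow_{sf} v$. *)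

(* Defs.v *)
(* Pure lambda-terms in de Bruijn representation
   (terms identified up to alpha-conversion; capture-avoiding
   substitution is the standard de Bruijn shift/substitution). *)
From Stdlib Require Import Arith.

Inductive term : Type :=
| Var : nat -> term
| App : term -> term -> term
| Lam : term -> term.

Fixpoint lift (k c : nat) (t : term) : term :=
  match t with
  | Var n => if Nat.ltb n c then Var n else Var (n + k)
  | App t1 t2 => App (lift k c t1) (lift k c t2)
  | Lam t1 => Lam (lift k (S c) t1)
  end.

(* subst_at j s t : substitute s for index j in t, decrementing indices > j.
   s is assumed to live in the context outside the j binders, so it is
   lifted by j when inserted. *)
Fixpoint subst_at (j : nat) (s : term) (t : term) : term :=
  match t with
  | Var n =>
      match Nat.compare n j with
      | Lt => Var n
      | Eq => lift j 0 s
      | Gt => Var (pred n)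
      end
  | App t1 t2 => App (subst_at j s t1) (subst_at j s t2)
  | Lam t1 => Lam (subst_at (S j) s t1)
  end.

(* beta-substitution: for Lam b, b[s/x] is subst0 s b *)
Definition subst0 (s b : term) : term := subst_at 0 s b.

Definition is_lam (t : term) : Prop :=
  match t with Lam _ => True | _ => False end.

Inductive wh : term -> term -> Prop :=
| wh_var : forall n, wh (Var n) (Var n)
| wh_lam : forall b, wh (Lam b) (Lam b)
| wh_beta : forall v1 v2 b v,
    wh v1 (Lam b) -> wh (subst0 v2 b) v -> wh (App v1 v2) v
| wh_stuck : forall v1 v2 v1',
    wh v1 v1' -> ~ is_lam v1' -> wh (App v1 v2) (App v1' v2).

Inductive hd : term -> term -> Prop :=
| hd_lam : forall v b b', wh v (Lam b) -> hd b b' -> hd v (Lam b')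
| hd_nolam : forall v v', wh v v' -> ~ is_lam v' -> hd v v'.

Inductive sf : term -> term -> Prop :=
| sf_var : forall n, sf (Var n) (Var n)
| sf_lam : forall b b', sf b b' -> sf (Lam b) (Lam b')
| sf_stuck : forall v1 v2 v1',
    wh v1 v1' -> ~ is_lam v1' -> sf (App v1 v2) (App v1' v2)
| sf_beta : forall v1 v2 b v,
    wh v1 (Lam b) -> sf (subst0 v2 b) v -> sf (App v1 v2) v.

(* Main.v *)
Require Import Defs.

Lemma wh_det : forall v a, wh v a -> forall b, wh v b -> a = b.
Proof.
  intros v a H; induction H; intros c Hc; inversion Hc; subst; auto.
  - match goal with H1 : wh v1 (Lam ?b0), H2 : wh (subst0 v2 ?b0) c |- _ =>
      apply IHwh1 in H1; inversion H1; subst; auto end.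
  - match goal with H1 : wh v1 ?x, H2 : ~ is_lam ?x |- _ =>
      apply IHwh1 in H1; subst; simpl in H2; contradiction end.
  - match goal with H1 : wh v1 (Lam _) |- _ =>
      apply IHwh in H1; subst; simpl in H0; contradiction end.
  - match goal with H1 : wh v1 _ |- _ => apply IHwh in H1; subst; auto end.
Qed.

Lemma wh_idem : forall v w, wh v w -> wh w w.
Proof.
  intros v w H; induction H; try constructor; auto.
Qed.

Lemma lemA : forall v w, wh v w -> forall r, sf w r -> sf v r.
Proof.
  intros v w H; induction H; intros r Hr; auto.
  - eapply sf_beta; eauto.
  - pose proof (wh_idem _ _ H) as Hi.
    inversion Hr; subst.
    + match goal with H1 : wh v1' _ |- _ => pose proof (wh_det _ _ Hi _ H1); subst end. apply sf_stuck; auto.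
    + match goal with H1 : wh v1' _ |- _ => pose proof (wh_det _ _ Hi _ H1); subst end. simpl in H0; contradiction.
Qed.

Lemma lemB : forall v w, wh v w -> ~ is_lam w -> sf w w.
Proof.
  intros v w H; induction H; intros Hn; auto.
  - constructor.
  - simpl in Hn; contradiction.
  - apply sf_stuck; auto. eapply wh_idem; eauto.
Qed.

Lemma lemC : forall u r, hd u r -> forall t, (forall w, wh u w -> wh t w) -> hd t r.
Proof.
  intros u r H; destruct H; intros t Ht.
  - eapply hd_lam; eauto.
  - apply hd_nolam; auto.
Qed.

Theorem theorem5 : forall v v' : term, hd v v' <-> sf v v'.
Proof.
  intros v v'; split; intro H.
  - induction H.
    + eapply lemA; eauto. constructor; auto.
    + eapply lemA; eauto. eapply lemB; eauto.
  - induction H.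
    + apply hd_nolam; [constructor | simpl; auto].
    + eapply hd_lam; [constructor | auto].
    + apply hd_nolam; [apply wh_stuck; auto | simpl; auto].
    + eapply lemC; eauto. intros w Hw. eapply wh_beta; eauto.
Qed.
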